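(* Let $l\subset[0,1]$ be a compact set and let $f:[0,\infty)\to[0,\infty)$ be a function such that for every $a\in l$, \[ \#\big(W(l,a)\cap[1,N]\big)=o_a(f(N))\quad\text{as }N\to\infty . \] Let $g(x)=\exp\big(-f(1-\log x/\log 2)\big)$ for $x\in(0,1)$, $g(0)=0$. Then $\mathcal{H}^g(l)<\infty$. In particular, if $f(N)=N^{\sigma}$ with $\sigma\in(0,1)$ one may take $g(x)=\exp(-(-\log x)^{\sigma})$, and if $\#(W(l,a)\cap[1,N])=o_a(N)$ for all $a\in l$ then $\dim_{\mathrm H} l=0$.
   Context: For a compact set $l\subset\mathbb{R}$ let $W(l)=\{k\in\mathbb{N}: l\cap([2^{-k-1},2^{-k}]\cup[-2^{-k},-2^{-k-1}])\neq\emptyset\}$, and for $a\in l$ let $W(l,a)=W(l-a)$. For a gauge function $g$, $\mathcal{H}^g(F)=\lim_{\delta\to0}\inf\{\sum_i g(\operatorname{diam}U_i): F\subset\bigcup_iU_i,\ \operatorname{diam}U_i<\delta\}$. *)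

(* Defs.v *)
From Stdlib Require Import Reals Lra Lia ClassicalEpsilon.
Open Scope R_scope.

Inductive ER : Type := Fin (r : R) | PInf.

Definition is_glb (E : R -> Prop) (m : R) : Prop :=
  (forall x, E x -> m <= x) /\ (forall b, (forall x, E x -> b <= x) -> b <= m).

(** [has_diam U d]: d is the diameter of U (diam of the empty set is 0;
    unbounded sets have no (finite) diameter). *)
Definition has_diam (U : R -> Prop) (d : R) : Prop :=
  ((forall x, ~ U x) /\ d = 0) \/
  is_lub (fun t => exists x y, U x /\ U y /\ t = Rabs (x - y)) d.

Definition cover_sum (g : R -> R) (F : R -> Prop) (delta s : R) : Prop :=
  exists (U : nat -> R -> Prop) (d : nat -> R),
    (forall i, has_diam (U i) (d i) /\ d i < delta) /\
    (forall x, F x -> exists i, U i x) /\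
    infinite_sum (fun i => g (d i)) s.

Definition is_Hdelta (g : R -> R) (F : R -> Prop) (delta : R) (v : ER) : Prop :=
  match v with
  | PInf => forall s, ~ cover_sum g F delta s
  | Fin m => is_glb (cover_sum g F delta) m
  end.

Definition is_Hmeasure (g : R -> R) (F : R -> Prop) (v : ER) : Prop :=
  exists Hd : R -> ER,
    (forall delta, 0 < delta -> is_Hdelta g F delta (Hd delta)) /\
    match v with
    | PInf => forall M, exists d0, 0 < d0 /\ forall delta, 0 < delta < d0 ->
                Hd delta = PInf \/ exists m, Hd delta = Fin m /\ M < m
    | Fin r => forall eps, 0 < eps -> exists d0, 0 < d0 /\
                forall delta, 0 < delta < d0 ->
                  exists m, Hd delta = Fin m /\ Rabs (m - r) < eps
    end.

Definition in_W (l : R -> Prop) (a : R) (k : nat) : Prop :=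
  exists x, l x /\
    ((/ 2 ^ (S k) <= x - a <= / 2 ^ k) \/ (- / 2 ^ k <= x - a <= - / 2 ^ (S k))).

Fixpoint count_upto (P : nat -> Prop) (n : nat) : nat :=
  match n with
  | O => O
  | S m => (count_upto P m + if excluded_middle_informative (P (S m)) then 1 else 0)%nat
  end.

Definition countW (l : R -> Prop) (a : R) (N : nat) : nat := count_upto (in_W l a) N.

Definition little_o (u v : nat -> R) : Prop :=
  forall eps, 0 < eps -> exists N0, forall N, (N0 <= N)%nat -> Rabs (u N) <= eps * Rabs (v N).

Definition gauge_of_f (f : R -> R) (x : R) : R :=
  if Rle_dec x 0 then 0 else exp (- f (1 - ln x / ln 2)).

Definition gauge_sigma (sigma : R) (x : R) : R :=
  if Rle_dec x 0 then 0 else exp (- Rpower (- ln x) sigma).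

Definition power_gauge (s : R) (x : R) : R :=
  if Rle_dec x 0 then 0 else Rpower x s.

Definition is_dimH (F : R -> Prop) (d : R) : Prop :=
  is_glb (fun s => 0 < s /\ is_Hmeasure (power_gauge s) F (Fin 0)) d.

(* Main.v *)
Require Import Defs.
From Stdlib Require Import Reals Lra Lia ClassicalEpsilon Classical List FunctionalExtensionality PropExtensionality ZArith.
Open Scope R_scope.


Ltac em_case H := destruct (excluded_middle_informative H).

Lemma count_S P n : count_upto P (S n) = (count_upto P n + if excluded_middle_informative (P (S n)) then 1 else 0)%nat.
Proof. reflexivity. Qed.

Lemma count_mono (P Q : nat -> Prop) n :
  (forall k, (1 <= k <= n)%nat -> P k -> Q k) -> (count_upto P n <= count_upto Q n)%nat.
Proof.
  induction n; intros H; simpl. lia.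
  assert (IH := IHn (fun k Hk => H k ltac:(lia))).
  destruct (excluded_middle_informative (P (S n))) as [p|p];
  destruct (excluded_middle_informative (Q (S n))) as [q|q]; try lia.
  exfalso; apply q, H; auto; lia.
Qed.

Lemma count_mono_n P n n' : (n <= n')%nat -> (count_upto P n <= count_upto P n')%nat.
Proof. induction 1; simpl; lia. Qed.

Lemma count_le_n P n : (count_upto P n <= n)%nat.
Proof. induction n; simpl; [lia|]. destruct (excluded_middle_informative _); lia. Qed.

Lemma count_or (P Q : nat -> Prop) n :
  (count_upto (fun k => P k \/ Q k) n + count_upto (fun k => P k /\ Q k) n
   = count_upto P n + count_upto Q n)%nat.
Proof.
  induction n; simpl; [lia|].
  destruct (excluded_middle_informative (P (S n)));
  destruct (excluded_middle_informative (Q (S n)));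
  destruct (excluded_middle_informative (P (S n) \/ Q (S n)));
  destruct (excluded_middle_informative (P (S n) /\ Q (S n))); try tauto; lia.
Qed.

Lemma count_or_le (P Q : nat -> Prop) n :
  (count_upto (fun k => P k \/ Q k) n <= count_upto P n + count_upto Q n)%nat.
Proof. pose proof (count_or P Q n); lia. Qed.

Lemma count_disj (P Q : nat -> Prop) n : (forall k, P k -> Q k -> False) ->
  (count_upto (fun k => P k \/ Q k) n = count_upto P n + count_upto Q n)%nat.
Proof.
  intros H. pose proof (count_or P Q n).
  assert (count_upto (fun k => P k /\ Q k) n = 0%nat).
  { assert (Hm := count_mono (fun k => P k /\ Q k) (fun _ => False) n).
    assert (count_upto (fun _ => False) n = 0%nat).
    { clear; induction n; simpl; auto. destruct (excluded_middle_informative False); [tauto|lia]. }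
    assert (count_upto (fun k : nat => P k /\ Q k) n <= count_upto (fun _ : nat => False) n)%nat.
    { apply Hm. intros k _ [a b]; exact (H k a b). } lia. }
  lia.
Qed.

Lemma count_eq1 k0 n : (1 <= k0 <= n)%nat -> (1 <= count_upto (fun k => k = k0) n)%nat.
Proof.
  induction n; intros Hk; [lia|]. simpl.
  destruct (Nat.eq_dec k0 (S n)).
  - destruct (excluded_middle_informative (S n = k0)); [lia|congruence].
  - specialize (IHn ltac:(lia)); lia.
Qed.

Lemma count_shiftS (Q : nat -> Prop) n :
  (count_upto (fun k => Q (S k)) n <= count_upto Q (S n))%nat.
Proof.
  induction n; simpl. lia.
  simpl in IHn.
  destruct (excluded_middle_informative (Q (S (S n)))); lia.
Qed.

Lemma count_stable (P : nat -> Prop) n : ~ P (S n) -> count_upto P (S n) = count_upto P n.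
Proof. intros H; simpl; destruct (excluded_middle_informative (P (S n))); [tauto|lia]. Qed.

Lemma count_restrict (Q : nat -> Prop) K n : (K <= n)%nat ->
  count_upto (fun j => Q j /\ (j <= K)%nat) n = count_upto Q K.
Proof.
  induction 1.
  - apply Nat.le_antisymm; apply count_mono; intros; intuition lia.
  - rewrite count_stable; auto. intros [_ H']; lia.
Qed.

Lemma count_le2 n : (count_upto (fun k => (k <= 2)%nat) n <= 2)%nat.
Proof.
  induction n; simpl; [lia|].
  destruct (excluded_middle_informative (S n <= 2)%nat); [|lia].
  assert (count_upto (fun k => (k <= 2)%nat) n <= n)%nat by apply count_le_n. lia.
Qed.

Lemma count_shift2 (Q : nat -> Prop) n :
  count_upto (fun k => (3 <= k)%nat /\ Q (k - 2)%nat) (n + 2) = count_upto Q n.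
Proof.
  induction n.
  - simpl. destruct (excluded_middle_informative _) as [[? _]|]; [lia|].
    destruct (excluded_middle_informative _) as [[? _]|]; [lia|]. lia.
  - replace (S n + 2)%nat with (S (n + 2)) by lia. simpl. rewrite IHn.
    destruct (excluded_middle_informative _) as [[_ h]|h];
    destruct (excluded_middle_informative (Q (S n))) as [h'|h']; try lia.
    + exfalso; apply h'; replace (S n) with (n + 2 - 1)%nat by lia; exact h.
    + exfalso; apply h; split; [lia|]. replace (n + 2 - 1)%nat with (S n) by lia; exact h'.
Qed.


Lemma hp_pos k : 0 < (/2)^k.
Proof. apply pow_lt; lra. Qed.

Lemma hp_S k : (/2)^(S k) = (/2)^k / 2.
Proof. simpl; field. Qed.

Lemma hp_le j k : (j <= k)%nat -> (/2)^k <= (/2)^j.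
Proof.
  induction 1; [lra|]. rewrite hp_S. pose proof (hp_pos m); lra.
Qed.

Lemma hp_add j k : (/2)^(j+k) = (/2)^j * (/2)^k.
Proof. apply pow_add. Qed.

Definition shell (k : nat) (d : R) : Prop := 2 * (/2)^k <= d < 4 * (/2)^k.

Lemma shell_exists N : forall d, (/2)^N <= d <= 1 -> exists k, (1 <= k <= S N)%nat /\ shell k d.
Proof.
  induction N; intros d Hd.
  - exists 1%nat. split; [lia|]. unfold shell; simpl in *; lra.
  - destruct (Rle_dec (/2) d).
    + destruct (Rle_dec 1 d).
      * exists 1%nat; split; [lia|]; unfold shell; simpl; lra.
      * exists 2%nat; split; [lia|]; unfold shell; simpl; lra.
    + destruct (IHN (2 * d)) as [k [Hk Hs]].
      { rewrite hp_S in Hd. lra. }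
      exists (S k); split; [lia|]. unfold shell in *; rewrite hp_S; lra.
Qed.

Lemma shell_lt j k d : shell j d -> d < 2 * (/2)^k -> (k < j)%nat.
Proof.
  intros [H1 H2] H. destruct (Nat.lt_ge_cases k j); auto.
  pose proof (hp_le j k H0). lra.
Qed.

Fixpoint sep (h : R) (L : list R) : Prop :=
  match L with
  | nil => True
  | x :: L' => (forall y, In y L' -> h <= Rabs (x - y)) /\ sep h L'
  end.

Lemma sep_In h L x y : sep h L -> In x L -> In y L -> x <> y -> h <= Rabs (x - y).
Proof.
  induction L as [|z L IH]; simpl; [tauto|]. intros [H1 H2] [->|Hx] [->|Hy] Hne.
  - congruence.
  - auto.
  - rewrite Rabs_minus_sym; auto.
  - auto.
Qed.

Lemma sep_filter h (p : R -> bool) L : sep h L -> sep h (filter p L).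
Proof.
  induction L as [|z L IH]; simpl; auto. intros [H1 H2].
  destruct (p z); simpl; auto. split; auto.
  intros y Hy. apply filter_In in Hy. apply H1; tauto.
Qed.

Lemma list_min (L : list R) : L <> nil -> exists a, In a L /\ forall x, In x L -> a <= x.
Proof.
  induction L as [|z L IH]; [congruence|]. intros _.
  destruct L as [|w L'].
  - exists z; simpl; split; auto. intros x [->|[]]; lra.
  - destruct IH as [a [Ha Hm]]; [congruence|].
    destruct (Rle_dec z a).
    + exists z; split; [left; auto|]. intros x [->|Hx]; [lra|]. specialize (Hm x Hx); lra.
    + exists a; split; [right; auto|]. intros x [->|Hx]; [lra|]. auto.
Qed.

Fixpoint sumk (F : nat -> R) (K : nat) : R :=
  match K with O => 0 | S K' => sumk F K' + F (S K') end.

Lemma sumk_le F G K : (forall k, (1 <= k <= K)%nat -> F k <= G k) -> sumk F K <= sumk G K.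
Proof.
  induction K; simpl; intros H; [lra|].
  pose proof (IHK (fun k Hk => H k ltac:(lia))). pose proof (H (S K) ltac:(lia)). lra.
Qed.

Lemma sumk_scal c F K : sumk (fun k => c * F k) K = c * sumk F K.
Proof. induction K; simpl; [ring|]. rewrite IHK; ring. Qed.

Lemma sum_bound (ne : nat -> Prop) K :
  sumk (fun k => if excluded_middle_informative (ne k) then (/2)^(count_upto ne (k-2)) else 0) K
  <= 3 - (/2)^(count_upto ne (K-1)) - 2 * (/2)^(count_upto ne K).
Proof.
  induction K.
  - simpl. lra.
  - simpl sumk. replace (S K - 2)%nat with (K - 1)%nat by lia.
    replace (S K - 1)%nat with K by lia.
    set (u := count_upto ne (K-1)) in *. set (v := count_upto ne K) in *.
    assert (Huv : v = u \/ v = S u).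
    { unfold u, v. destruct K; simpl; [auto|].
      replace (K - 0)%nat with K by lia.
      destruct (excluded_middle_informative (ne (S K))); [right|left]; lia. }
    rewrite count_S. fold v.
    pose proof (hp_pos u). pose proof (hp_pos v).
    destruct (excluded_middle_informative (ne (S K))).
    + replace (v + 1)%nat with (S v) by lia. rewrite hp_S.
      destruct Huv as [-> | ->]; [lra|]. rewrite hp_S in *. lra.
    + replace (v + 0)%nat with v by lia.
      assert ((/2)^v <= (/2)^u) by (apply hp_le; lia). lra.
Qed.


Definition hitk (P : list R) (b : R) (k : nat) : Prop :=
  exists x, In x P /\ shell k (Rabs (x - b)).
Definition pot (N : nat) (P : list R) (b : R) : nat := count_upto (hitk P b) (S N).

Definition shellb (k : nat) (d : R) : bool :=
  if Rle_dec (2 * (/2)^k) d then if Rlt_dec d (4 * (/2)^k) then true else false else false.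

Lemma shellb_iff k d : shellb k d = true <-> shell k d.
Proof.
  unfold shellb, shell. destruct (Rle_dec (2 * (/2)^k) d); [destruct (Rlt_dec d (4 * (/2)^k))|];
  split; intros; try tauto; try discriminate; lra.
Qed.

Lemma filter_length_le (p : R -> bool) L : (length (filter p L) <= length L)%nat.
Proof. induction L; simpl; [lia|]. destruct (p a); simpl; lia. Qed.

Lemma filter_length_lt (p : R -> bool) L a : In a L -> p a = false -> (length (filter p L) < length L)%nat.
Proof.
  induction L as [|z L IH]; simpl; [tauto|]. intros [->|H] Hp.
  - rewrite Hp. pose proof (filter_length_le p L). lia.
  - destruct (p z); simpl; specialize (IH H Hp); lia.
Qed.

Definition eqb_R (a x : R) : bool := if Req_EM_T x a then true else false.

Lemma sep_eq_len h a L : 0 < h -> sep h L -> (length (filter (eqb_R a) L) <= 1)%nat.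
Proof.
  intros Hh. induction L as [|z L IH]; simpl; [lia|]. intros [H1 H2].
  unfold eqb_R at 1. destruct (Req_EM_T z a).
  - subst. simpl. assert (filter (eqb_R a) L = nil).
    { destruct (filter (eqb_R a) L) eqn:E; auto. exfalso.
      assert (In r (filter (eqb_R a) L)) by (rewrite E; left; auto).
      apply filter_In in H. destruct H as [Hr Hb]. unfold eqb_R in Hb.
      destruct (Req_EM_T r a); [|discriminate]. subst. specialize (H1 a Hr).
      rewrite Rminus_diag, Rabs_R0 in H1. lra. }
    rewrite H; simpl; lia.
  - auto.
Qed.

Lemma sumk_plus F G K : sumk (fun k => F k + G k) K = sumk F K + sumk G K.
Proof. induction K; simpl; [ring|]. rewrite IHK; ring. Qed.

Lemma sumk_ge_term F K k0 : (1 <= k0 <= K)%nat -> (forall k, 0 <= F k) -> F k0 <= sumk F K.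
Proof.
  induction K; intros Hk HF; [lia|]. simpl.
  destruct (Nat.eq_dec k0 (S K)).
  - subst. assert (0 <= sumk F K). { clear -HF. induction K; simpl; [lra|]. pose proof (HF (S K)); lra. }
    lra.
  - pose proof (IHK ltac:(lia) HF). pose proof (HF (S K)). lra.
Qed.

Lemma sumk_nonneg F K : (forall k, 0 <= F k) -> 0 <= sumk F K.
Proof. intros HF; induction K; simpl; [lra|]. pose proof (HF (S K)); lra. Qed.

Lemma len_part a K L :
  (forall x, In x L -> x <> a -> exists k, (1 <= k <= K)%nat /\ shell k (x - a)) ->
  INR (length L) <= INR (length (filter (eqb_R a) L)) +
     sumk (fun k => INR (length (filter (fun x => shellb k (x - a)) L))) K.
Proof.
  induction L as [|z L IH]; intros H.
  - pose proof (sumk_nonneg (fun k => INR (length (filter (fun x => shellb k (x - a)) nil))) K (fun k => pos_INR _)).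
    simpl in *. lra.
  - assert (IH' := IH (fun x Hx => H x (or_intror Hx))).
    simpl length at 1. rewrite S_INR.
    assert (E: sumk (fun k => INR (length (filter (fun x => shellb k (x - a)) (z :: L)))) K =
            sumk (fun k => INR (length (filter (fun x => shellb k (x - a)) L))) K +
            sumk (fun k => if shellb k (z - a) then 1 else 0) K).
    { rewrite <- sumk_plus. apply f_equal2; auto. apply functional_extensionality; intro k.
      simpl. destruct (shellb k (z - a)); simpl length; [rewrite S_INR|]; ring. }
    rewrite E. simpl filter. unfold eqb_R at 1.
    destruct (Req_EM_T z a).
    + simpl length. rewrite S_INR.
      assert (0 <= sumk (fun k => if shellb k (z - a) then 1 else 0) K).
      { apply sumk_nonneg. intro k; destruct (shellb k (z-a)); lra. }
      lra.
    + destruct (H z (or_introl eq_refl) n) as [k0 [Hk0 Hs]].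
      assert (1 <= sumk (fun k => if shellb k (z - a) then 1 else 0) K).
      { pose proof (sumk_ge_term (fun k => if shellb k (z - a) then 1 else 0) K k0 Hk0) as T.
        apply shellb_iff in Hs. cbv beta in T. rewrite Hs in T. apply T.
        intro k; destruct (shellb k (z-a)); lra. }
      lra.
Qed.


Definition Gf (a : R) (P : list R) (j : nat) := filter (fun x => shellb j (x - a)) P.

Lemma Gf_In a P j x : In x (Gf a P j) <-> In x P /\ shell j (x - a).
Proof. unfold Gf. rewrite filter_In, shellb_iff. tauto. Qed.

Lemma key N P a k b :
  In a P -> (forall x, In x P -> a <= x) -> (1 <= k <= S N)%nat ->
  In b (Gf a P k) ->
  (2 * pot N (Gf a P k) b + 2 + count_upto (fun j => Gf a P j <> nil) (k-2) <= 2 * pot N P b)%nat.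
Proof.
  intros Ha Hmin Hk Hb.
  apply Gf_In in Hb as [HbP Hbs].
  set (A := hitk (Gf a P k) b).
  set (B := fun j : nat => j = k).
  set (C := fun j => (j <= k - 1)%nat /\ hitk P b j).
  assert (HA : forall j, A j -> (k < j)%nat).
  { intros j [x [Hx Hs]]. apply Gf_In in Hx as [_ Hxs].
    apply (shell_lt j k (Rabs (x - b))); auto.
    unfold shell in *. apply Rabs_def1; lra. }
  assert (Hsum : (count_upto A (S N) + count_upto B (S N) + count_upto C (S N) <= pot N P b)%nat).
  { unfold pot. rewrite <- Nat.add_assoc.
    rewrite <- (count_disj B C). 2:{ unfold B, C; intros; lia. }
    rewrite <- count_disj. 2:{ intros j h1 [h2|[h2 _]]; specialize (HA j h1); unfold B in *; lia. }
    apply count_mono. intros j _ [h|[h|[_ h]]]; auto.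
    - destruct h as [x [Hx Hs]]. exists x. split; auto. apply Gf_In in Hx; tauto.
    - unfold B in h; subst j. exists a. split; auto.
      rewrite Rabs_minus_sym. rewrite Rabs_right; auto. specialize (Hmin b HbP); lra. }
  assert (HB : (1 <= count_upto B (S N))%nat) by (apply count_eq1; lia).
  assert (HC : (count_upto (fun j => Gf a P j <> nil) (k-2) <= 2 * count_upto C (S N))%nat).
  { rewrite <- (count_restrict _ (k-2) (S N)) by lia.
    eapply Nat.le_trans.
    { apply (count_mono _ (fun j => C j \/ C (S j))).
      intros j Hj [Hne Hjk].
      destruct (Gf a P j) as [|g G'] eqn:E; [congruence|].
      assert (Hg : In g (Gf a P j)) by (rewrite E; left; auto).
      apply Gf_In in Hg as [HgP Hgs].
      assert (Hkj : (/2)^k <= (/2)^j / 4).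
      { replace ((/2)^j / 4) with ((/2)^(j+2)) by (rewrite hp_add; simpl; field).
        apply hp_le; lia. }
      unfold shell in *.
      assert (Hd : Rabs (g - b) = g - b) by (apply Rabs_right; lra).
      destruct (Rle_dec (2 * (/2)^j) (g - b)).
      - left. split; [lia|]. exists g; split; auto. rewrite Hd. unfold shell; lra.
      - right. split; [lia|]. exists g; split; auto. rewrite Hd. unfold shell. rewrite hp_S. lra. }
    eapply Nat.le_trans; [apply count_or_le|].
    pose proof (count_shiftS C (S N)).
    rewrite (count_stable C (S N)) in H. 2:{ unfold C; lia. }
    lia. }
  unfold pot in *. fold A. lia.
Qed.


Lemma comb N : forall n P M, (length P <= n)%nat -> sep ((/2)^N) P ->
  (forall x, In x P -> 0 <= x <= 1) ->
  (forall b, In b P -> (2 * pot N P b <= M)%nat) -> INR (length P) <= 2^M.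
Proof.
  induction n; intros P M Hlen Hsep H01 Hpot.
  - replace (length P) with 0%nat by lia. simpl. pose proof (pow_lt 2 M); lra.
  - destruct P as [|p0 P0] eqn:EP.
    { simpl. pose proof (pow_lt 2 M); lra. }
    rewrite <- EP in *.
    destruct (list_min P) as [a [Ha Hmin]]; [rewrite EP; congruence|].
    set (ne := fun j => Gf a P j <> nil).
    pose proof (hp_pos N) as HhN.
    assert (S1 : INR (length P) <= 1 + sumk (fun k => INR (length (Gf a P k))) (S N)).
    { pose proof (len_part a (S N) P) as T.
      pose proof (sep_eq_len _ a P HhN Hsep).
      assert (INR (length (filter (eqb_R a) P)) <= 1) by (apply (le_INR _ 1); auto).
      unfold Gf. enough (INR (length P) <= INR (length (filter (eqb_R a) P)) +
        sumk (fun k => INR (length (filter (fun x => shellb k (x - a)) P))) (S N)) by lra.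
      apply T. intros x Hx Hxa. apply shell_exists.
      pose proof (sep_In _ P x a Hsep Hx Ha Hxa). pose proof (Hmin x Hx).
      pose proof (H01 x Hx). pose proof (H01 a Ha).
      rewrite Rabs_right in H1 by lra. lra. }
    assert (S2 : forall k, (1 <= k <= S N)%nat ->
      INR (length (Gf a P k)) <= (if excluded_middle_informative (ne k)
        then 2^M / 4 * (/2)^(count_upto ne (k-2)) else 0) /\
      (ne k -> (2 + count_upto ne (k-2) <= M)%nat)).
    { intros k Hk. destruct (excluded_middle_informative (ne k)) as [Hn|Hn].
      - destruct (Gf a P k) as [|b G'] eqn:E; [congruence|].
        assert (Hb : In b (Gf a P k)) by (rewrite E; left; auto).
        pose proof (key N P a k b Ha Hmin Hk Hb) as Kb. fold ne in Kb.
        pose proof (Hpot b (proj1 (proj1 (Gf_In _ _ _ _) Hb))).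
        split; [|intros _; lia].
        set (s := count_upto ne (k-2)) in *.
        rewrite <- E.
        assert (HG := IHn (Gf a P k) (M - 2 - s)%nat).
        assert (Hlt : (length (Gf a P k) < length P)%nat).
        { apply (filter_length_lt _ P a Ha). destruct (shellb k (a - a)) eqn:T; [exfalso|reflexivity].
          apply shellb_iff in T. unfold shell in T. rewrite Rminus_diag in T.
          pose proof (hp_pos k); lra. }
        eapply Rle_trans. apply HG.
        + lia.
        + apply sep_filter; auto.
        + intros x Hx. apply Gf_In in Hx. apply H01; tauto.
        + intros b' Hb'. pose proof (key N P a k b' Ha Hmin Hk Hb') as Kb'. fold ne in Kb'.
          fold s in Kb'. pose proof (Hpot b' (proj1 (proj1 (Gf_In _ _ _ _) Hb'))). lia.
        + replace (2^M) with (2^(M - 2 - s) * 2^2 * 2^s).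
          2:{ rewrite <- !pow_add. f_equal. lia. }
          rewrite pow_inv. field_simplify; [lra|].
          apply pow_nonzero; lra.
      - split; [apply Req_le; unfold ne in Hn; destruct (Gf a P k); [reflexivity|exfalso; apply Hn; discriminate]|tauto]. }
    assert (S3 : sumk (fun k => INR (length (Gf a P k))) (S N) <=
                 sumk (fun k => 2^M/4 * (if excluded_middle_informative (ne k)
                        then (/2)^(count_upto ne (k-2)) else 0)) (S N)).
    { apply sumk_le. intros k Hk. destruct (S2 k Hk) as [T _].
      destruct (excluded_middle_informative (ne k)); lra. }
    rewrite sumk_scal in S3.
    pose proof (sum_bound ne (S N)).
    pose proof (hp_pos (count_upto ne (S N - 1))). pose proof (hp_pos (count_upto ne (S N))).
    destruct (Nat.lt_ge_cases M 2).
    +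
      assert (sumk (fun k => INR (length (Gf a P k))) (S N) <= sumk (fun _ => 0) (S N)).
      { apply sumk_le. intros k Hk. destruct (S2 k Hk) as [T T'].
        destruct (excluded_middle_informative (ne k)) as [Hn|Hn]; [specialize (T' Hn); lia|lra]. }
      assert (sumk (fun _ : nat => 0) (S N) = 0) by (clear; induction (S N); simpl; lra).
      pose proof (pow_R1_Rle 2 M ltac:(lra)). lra.
    + assert (4 <= 2^M).
      { replace 4 with (2^2) by (simpl; lra). apply Rle_pow; lra || lia. }
      assert (0 < 2^M/4) by lra.
      assert (2 ^ M / 4 * sumk (fun k => if excluded_middle_informative (ne k)
        then (/ 2) ^ count_upto ne (k - 2) else 0) (S N) <= 2^M/4 * 3).
      { apply Rmult_le_compat_l; lra. }
      lra.
Qed.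


Lemma inv_pow2 k : / 2 ^ k = (/2)^k.
Proof. rewrite pow_inv; reflexivity. Qed.

Lemma pot_countW (l : R -> Prop) N P b :
  (forall y, In y P -> l y) -> (pot N P b <= 2 + countW l b N)%nat.
Proof.
  intros Hl. unfold pot, countW.
  eapply Nat.le_trans.
  { apply (count_mono _ (fun k => (k <= 2)%nat \/ ((3 <= k)%nat /\ in_W l b (k - 2)))).
    intros k _ [x [Hx Hs]].
    destruct (Nat.le_gt_cases k 2); [left; auto|right; split; [lia|]].
    exists x; split; auto.
    replace (S (k - 2)) with (k - 1)%nat by lia.
    rewrite !inv_pow2.
    assert (E1 : (/2)^(k-1) = 2 * (/2)^k).
    { replace k with (S (k-1)) at 2 by lia. rewrite hp_S; field. }
    assert (E2 : (/2)^(k-2) = 4 * (/2)^k).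
    { replace k with (S (S (k-2))) at 2 by lia. rewrite !hp_S; field. }
    rewrite E1, E2. unfold shell in Hs.
    destruct (Rle_dec 0 (x - b)).
    - rewrite Rabs_right in Hs by lra. left; lra.
    - rewrite Rabs_left in Hs by lra. right; lra. }
  eapply Nat.le_trans; [apply count_or_le|].
  pose proof (count_le2 (S N)).
  pose proof (count_mono_n (fun k => (3 <= k)%nat /\ in_W l b (k - 2)) (S N) (N + 2) ltac:(lia)).
  rewrite count_shift2 in H0. lia.
Qed.

Lemma exp_mono a b : a <= b -> exp a <= exp b.
Proof. intros [H|H]; [left; apply exp_increasing; auto|rewrite H; lra]. Qed.

Lemma ln4_lt2 : ln 4 < 2.
Proof.
  rewrite <- (ln_exp 2). apply ln_increasing; [lra|].
  pose proof (exp_ineq1 1 ltac:(lra)).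
  replace 2 with (1 + 1) by ring. rewrite exp_plus. nra.
Qed.

Lemma ln4_pos : 0 < ln 4.
Proof. rewrite <- ln_1. apply ln_increasing; lra. Qed.

Lemma sep_len (l : R -> Prop) N (x : R) P : 0 <= x -> sep ((/2)^N) P ->
  (forall y, In y P -> l y /\ 0 <= y <= 1 /\ INR (countW l y N) <= x) ->
  INR (length P) <= 64 * exp (x * ln 4).
Proof.
  intros Hx Hsep HP.
  set (K := Z.to_nat (up x)).
  destruct (archimed x) as [Hu1 Hu2].
  assert (HK : forall y, In y P -> (countW l y N <= K)%nat).
  { intros y Hy. destruct (HP y Hy) as [_ [_ Hc]].
    assert (IZR (Z.of_nat (countW l y N)) < IZR (up x)) by (rewrite <- INR_IZR_INZ; lra).
    apply lt_IZR in H. unfold K. lia. }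
  assert (HKx : INR K <= x + 1).
  { unfold K. destruct (Z_lt_le_dec (up x) 0).
    - replace (Z.to_nat (up x)) with 0%nat by lia. simpl; lra.
    - rewrite INR_IZR_INZ, Z2Nat.id by lia. lra. }
  assert (H1 := comb N (length P) P (2 * (2 + K)) (Nat.le_refl _) Hsep
    (fun y Hy => proj1 (proj2 (HP y Hy)))).
  eapply Rle_trans. apply H1.
  { intros b Hb. pose proof (pot_countW l N P b (fun y Hy => proj1 (HP y Hy))).
    pose proof (HK b Hb). lia. }
  rewrite pow_mult.
  replace (2^2) with 4 by (simpl; lra).
  assert (E64 : exp (INR 3 * ln 4) = 64).
  { pose proof (Rpower_pow 3 4 ltac:(lra)) as T. unfold Rpower in T. rewrite T. simpl; lra. }
  rewrite <- (Rpower_pow _ 4) by lra. unfold Rpower.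
  rewrite <- E64, <- exp_plus. apply exp_mono.
  rewrite plus_INR. pose proof ln4_pos. simpl (INR 2). simpl (INR 3). nra.
Qed.


Lemma max_list (Q : list R -> Prop) B : Q nil -> (forall P, Q P -> (length P <= B)%nat) ->
  exists P, Q P /\ forall P', Q P' -> (length P' <= length P)%nat.
Proof.
  intros H0 HB.
  assert (forall j, exists P, Q P /\ forall P', Q P' -> (length P' <= length P + (B - j))%nat).
  { induction j.
    - exists nil. split; auto. intros P' HP'. specialize (HB P' HP'). simpl; lia.
    - destruct IHj as [P [HP Hm]].
      destruct (classic (exists P', Q P' /\ (length P + (B - S j) < length P')%nat)) as [[P' [HP' Hl]]|Hn].
      + exists P'. split; auto. intros P'' HP''. specialize (Hm P'' HP''). lia.
      + exists P. split; auto. intros P' HP'.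
        destruct (Nat.le_gt_cases (length P') (length P + (B - S j))); auto.
        exfalso; apply Hn; eauto. }
  destruct (H B) as [P [HP Hm]]. exists P. split; auto. intros P' HP'. specialize (Hm P' HP'). lia.
Qed.

Lemma has_diam_ext (U V : R -> Prop) d : (forall x, U x <-> V x) -> has_diam V d -> has_diam U d.
Proof.
  intros H. assert (U = V) as -> by (apply functional_extensionality; intro x; apply propositional_extensionality; auto).
  auto.
Qed.

Lemma has_diam_empty (U : R -> Prop) : (forall x, ~ U x) -> has_diam U 0.
Proof. intros H; left; auto. Qed.

Lemma has_diam_single c : has_diam (fun x => x = c) 0.
Proof.
  right. split.
  - intros t [x [y [-> [-> ->]]]]. rewrite Rminus_diag, Rabs_R0; lra.
  - intros b Hb. apply Hb. exists c, c. rewrite Rminus_diag, Rabs_R0; auto.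
Qed.

Lemma Rabs_le_inv' a b : Rabs a <= b -> - b <= a <= b.
Proof. unfold Rabs; destruct (Rcase_abs a); intros; lra. Qed.

Lemma has_diam_ball c r : 0 <= r -> has_diam (fun x => Rabs (x - c) <= r) (2 * r).
Proof.
  intros Hr. right. split.
  - intros t [x [y [Hx [Hy ->]]]].
    apply Rabs_le_inv' in Hx. apply Rabs_le_inv' in Hy. apply Rabs_le. lra.
  - intros b Hb. apply Hb. exists (c + r), (c - r).
    repeat split; try (apply Rabs_le; lra).
    replace (c + r - (c - r)) with (2 * r) by ring. rewrite Rabs_right; lra.
Qed.

Fixpoint ssum (F : nat -> R) (L : nat) : R :=
  match L with O => 0 | S L' => ssum F L' + F L' end.

Lemma ssum_ext F G L : (forall j, (j < L)%nat -> F j = G j) -> ssum F L = ssum G L.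
Proof. induction L; simpl; intros; auto. rewrite IHL by (intros; apply H; lia). rewrite (H L) by lia; auto. Qed.

Lemma ssum_const v L : ssum (fun _ => v) L = INR L * v.
Proof. induction L; simpl ssum; [simpl; ring|]. rewrite IHL, S_INR; ring. Qed.

Lemma ssum_nonneg F L : (forall j, 0 <= F j) -> 0 <= ssum F L.
Proof. intros H; induction L; simpl; [lra|]. pose proof (H L); lra. Qed.

Definition fin_cover (g : R -> R) (E : R -> Prop) (delta r : R) : Prop :=
  exists (L : nat) (V : nat -> R -> Prop) (e : nat -> R),
   (1 <= L)%nat /\ (forall j, has_diam (V j) (e j) /\ e j < delta) /\
   (forall x, E x -> exists j, (j < L)%nat /\ V j x) /\ ssum (fun j => g (e j)) L <= r.

Lemma coverA (g : R -> R) (l E : R -> Prop) N x delta :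
  (forall y, 0 <= g y) -> g 0 = 0 -> 0 <= x -> 2 * (/2)^N < delta ->
  (forall y, E y -> l y /\ 0 <= y <= 1 /\ INR (countW l y N) <= x) ->
  fin_cover g E delta (64 * exp (x * ln 4) * g (2 * (/2)^N)).
Proof.
  intros Hg0 Hg Hx Hd HE.
  set (h := (/2)^N). pose proof (hp_pos N) as Hh. fold h in Hh, Hd.
  set (Q := fun P => sep h P /\ forall y, In y P -> E y).
  destruct (max_list Q (Z.to_nat (up (64 * exp (x * ln 4))))) as [P [[HPs HPE] HPm]].
  { split; simpl; tauto. }
  { intros P [Hs HE']. pose proof (sep_len l N x P Hx Hs (fun y Hy => HE y (HE' y Hy))).
    destruct (archimed (64 * exp (x * ln 4))) as [Hu _].
    assert (IZR (Z.of_nat (length P)) < IZR (up (64 * exp (x * ln 4)))) by (rewrite <- INR_IZR_INZ; lra).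
    apply lt_IZR in H0. lia. }
  exists (S (length P)), (fun j y => (j < length P)%nat /\ Rabs (y - nth j P 0) <= h),
    (fun j => if lt_dec j (length P) then 2 * h else 0).
  split; [lia|]. split; [|split].
  - intros j. destruct (lt_dec j (length P)).
    + split; [|lra]. apply (has_diam_ext _ (fun y => Rabs (y - nth j P 0) <= h)).
      { intro y; tauto. } apply has_diam_ball; lra.
    + split; [|pose proof (hp_pos N); lra]. apply has_diam_empty. intros y [Hj _]; tauto.
  - intros y Hy. destruct (classic (exists p, In p P /\ Rabs (y - p) < h)) as [[p [Hp Hyp]]|Hn].
    + destruct (In_nth P p 0 Hp) as [j [Hj Hnth]]. exists j. split; [lia|]. split; auto.
      rewrite Hnth; lra.
    + exfalso. assert (Q (y :: P)).
      { split.
        - simpl. split; auto. intros z Hz. destruct (Rle_dec h (Rabs (y - z))); auto.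
          exfalso; apply Hn. exists z; split; auto; lra.
        - intros z [<-|Hz]; auto. }
      specialize (HPm _ H). simpl in HPm. lia.
  - simpl ssum. destruct (lt_dec (length P) (length P)); [lia|]. rewrite Hg, Rplus_0_r.
    rewrite (ssum_ext _ (fun _ => g (2 * h))) by (intros j Hj; destruct (lt_dec j (length P)); [auto|lia]).
    rewrite ssum_const. apply Rmult_le_compat_r; [apply Hg0|].
    apply (sep_len l N x P Hx HPs (fun y Hy => HE y (HPE y Hy))).
Qed.

Lemma coverB (g : R -> R) (E : R -> Prop) delta B :
  g 0 = 0 -> 0 < delta ->
  (forall P, NoDup P -> (forall y, In y P -> E y) -> (length P <= B)%nat) ->
  fin_cover g E delta 0.
Proof.
  intros Hg Hd HB.
  destruct (max_list (fun P => NoDup P /\ forall y, In y P -> E y) B) as [P [[HPn HPE] HPm]].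
  { split; [constructor|simpl; tauto]. }
  { intros P [H1 H2]; auto. }
  exists (S (length P)), (fun j y => (j < length P)%nat /\ y = nth j P 0), (fun _ => 0).
  split; [lia|]. split; [|split].
  - intros j. split; auto. destruct (lt_dec j (length P)).
    + apply (has_diam_ext _ (fun y => y = nth j P 0)); [intro; tauto|apply has_diam_single].
    + apply has_diam_empty. intros y [Hj _]; tauto.
  - intros y Hy. destruct (In_dec Req_EM_T y P) as [Hin|Hn].
    + destruct (In_nth P y 0 Hin) as [j [Hj Hnth]]. exists j. split; [lia|]. auto.
    + exfalso. assert (NoDup (y :: P) /\ forall z, In z (y :: P) -> E z).
      { split; [constructor; auto|]. intros z [<-|Hz]; auto. }
      specialize (HPm _ H). simpl in HPm. lia.
  - rewrite ssum_const, Hg. lra.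
Qed.

Lemma sep_mono h h' P : h <= h' -> sep h' P -> sep h P.
Proof.
  intros H. induction P as [|z P IH]; simpl; auto. intros [H1 H2]; split; auto.
  intros y Hy; specialize (H1 y Hy); lra.
Qed.

Lemma nodup_sep P : NoDup P -> exists d, 0 < d /\ sep d P.
Proof.
  induction 1 as [|z P Hz HP IH].
  - exists 1; simpl; split; auto; lra.
  - destruct IH as [d [Hd Hs]].
    assert (exists e, 0 < e /\ forall y, In y P -> e <= Rabs (z - y)).
    { clear - Hz. induction P as [|w P IHP].
      - exists 1; simpl; split; [lra|tauto].
      - destruct IHP as [e [He Hm]]. { intro; apply Hz; right; auto. }
        exists (Rmin e (Rabs (z - w))). split.
        + apply Rmin_glb_lt; auto. apply Rabs_pos_lt. intro. apply Hz. left. lra.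
        + intros y [<-|Hy]; [apply Rmin_r|]. eapply Rle_trans; [apply Rmin_l|auto]. }
    destruct H as [e [He Hm]].
    exists (Rmin d e). split; [apply Rmin_glb_lt; auto|]. simpl. split.
    + intros y Hy. eapply Rle_trans; [apply Rmin_r|auto].
    + eapply sep_mono; [apply Rmin_l|auto].
Qed.


Fixpoint pos (Lf : nat -> nat) (i : nat) : nat * nat :=
  match i with
  | O => (0%nat, 0%nat)
  | S i' => let (M, j) := pos Lf i' in if Nat.ltb (S j) (Lf M) then (M, S j) else (S M, 0%nat)
  end.

Lemma pos_valid Lf : (forall M, (1 <= Lf M)%nat) -> forall i, (snd (pos Lf i) < Lf (fst (pos Lf i)))%nat.
Proof.
  intros H. induction i; simpl. apply H.
  destruct (pos Lf i) as [M j]. simpl in IHi.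
  destruct (Nat.ltb (S j) (Lf M)) eqn:E; simpl.
  - apply Nat.ltb_lt in E; auto.
  - apply H.
Qed.

Lemma pos_step Lf i M : pos Lf i = (M, 0%nat) -> forall t, (t < Lf M)%nat -> pos Lf (i + t) = (M, t).
Proof.
  intros Hi. induction t; intros Ht.
  - rewrite Nat.add_0_r; auto.
  - replace (i + S t)%nat with (S (i + t)) by lia. simpl. rewrite IHt by lia.
    destruct (Nat.ltb (S t) (Lf M)) eqn:E; auto. apply Nat.ltb_ge in E; lia.
Qed.

Lemma pos_reach Lf : (forall M, (1 <= Lf M)%nat) -> forall M, exists i, pos Lf i = (M, 0%nat).
Proof.
  intros H. induction M.
  - exists 0%nat; auto.
  - destruct IHM as [i Hi]. exists (S (i + (Lf M - 1))).
    simpl. rewrite (pos_step Lf i M Hi) by (specialize (H M); lia).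
    destruct (Nat.ltb (S (Lf M - 1)) (Lf M)) eqn:E; auto.
    apply Nat.ltb_lt in E. specialize (H M). lia.
Qed.

Lemma pos_sum Lf (h : nat -> nat -> R) : (forall M, (1 <= Lf M)%nat) -> forall n,
  sum_f_R0 (fun i => h (fst (pos Lf i)) (snd (pos Lf i))) n =
  ssum (fun M => ssum (h M) (Lf M)) (fst (pos Lf n)) + ssum (h (fst (pos Lf n))) (S (snd (pos Lf n))).
Proof.
  intros HL. induction n.
  - simpl. ring.
  - simpl sum_f_R0. rewrite IHn. pose proof (pos_valid Lf HL n) as Hv. simpl pos.
    destruct (pos Lf n) as [M j]. simpl in *.
    destruct (Nat.ltb (S j) (Lf M)) eqn:E; simpl.
    + ring.
    + apply Nat.ltb_ge in E. replace (Lf M) with (S j) by lia. simpl ssum. ring.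
Qed.

Lemma ssum_prefix F a b : (a <= b)%nat -> (forall j, 0 <= F j) -> ssum F a <= ssum F b.
Proof. induction 1; intros HF; [lra|]. simpl. pose proof (HF m). pose proof (IHle HF). lra. Qed.

Lemma ssum_geo eps K : ssum (fun M => eps * (/2)^(S (S M))) K = eps / 2 - eps / 2 * (/2)^K.
Proof. induction K; [simpl; field|].
  change (ssum (fun M => eps * (/2)^(S (S M))) (S K)) with (ssum (fun M => eps * (/2)^(S (S M))) K + eps * (/2)^(S (S K))).
  rewrite IHK. simpl. field. Qed.

Lemma ssum_le F G L : (forall j, F j <= G j) -> ssum F L <= ssum G L.
Proof. intros H; induction L; simpl; [lra|]. pose proof (H L); lra. Qed.

Lemma combine (g : R -> R) (l : R -> Prop) (E : nat -> R -> Prop) delta eps :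
  (forall y, 0 <= g y) -> 0 < eps -> (forall x, l x -> exists M, E M x) ->
  (forall M, fin_cover g (E M) delta (eps * (/2)^(S (S M)))) ->
  exists s, cover_sum g l delta s /\ s <= eps / 2.
Proof.
  intros Hg Heps Hl HF.
  assert (HF' : forall M, exists t : nat * (nat -> R -> Prop) * (nat -> R),
    (1 <= fst (fst t))%nat /\ (forall j, has_diam (snd (fst t) j) (snd t j) /\ snd t j < delta) /\
    (forall x, E M x -> exists j, (j < fst (fst t))%nat /\ snd (fst t) j x) /\
    ssum (fun j => g (snd t j)) (fst (fst t)) <= eps * (/2)^(S (S M))).
  { intros M. destruct (HF M) as [L [V [e H]]]. exists (L, V, e). exact H. }
  destruct (choice _ HF') as [t Ht].
  set (Lf := fun M => fst (fst (t M))).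
  set (Vf := fun M => snd (fst (t M))).
  set (ef := fun M => snd (t M)).
  assert (HL : forall M, (1 <= Lf M)%nat) by (intro M; apply (Ht M)).
  set (h := fun M j => g (ef M j)).
  set (u := fun n => sum_f_R0 (fun i => h (fst (pos Lf i)) (snd (pos Lf i))) n).
  assert (Hub : forall n, u n <= eps / 2).
  { intros n. unfold u. rewrite pos_sum by auto.
    set (M := fst (pos Lf n)). set (j := snd (pos Lf n)).
    assert (ssum (h M) (S j) <= ssum (h M) (Lf M)).
    { apply ssum_prefix; [apply (pos_valid Lf HL n)|intro; apply Hg]. }
    assert (ssum (fun M => ssum (h M) (Lf M)) (S M) <= ssum (fun M => eps * (/2)^(S (S M))) (S M)).
    { apply ssum_le. intro M'. apply (Ht M'). }
    rewrite ssum_geo in H0.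
    assert (0 <= eps / 2 * (/2)^(S M)) by (pose proof (hp_pos (S M)); apply Rmult_le_pos; lra).
    change (ssum (fun M => ssum (h M) (Lf M)) (S M)) with (ssum (fun M => ssum (h M) (Lf M)) M + ssum (h M) (Lf M)) in H0.
    lra. }
  assert (Hgrow : Un_growing u).
  { intro n. unfold u. change (sum_f_R0 ?f (S n)) with (sum_f_R0 f n + f (S n)). cbv beta.
    pose proof (Hg (ef (fst (pos Lf (S n))) (snd (pos Lf (S n))))). unfold h. lra. }
  destruct (growing_cv u Hgrow) as [s Hs].
  { exists (eps / 2). intros x [n ->]. auto. }
  exists s. split.
  - exists (fun i => Vf (fst (pos Lf i)) (snd (pos Lf i))), (fun i => ef (fst (pos Lf i)) (snd (pos Lf i))).
    split; [|split].
    + intro i. apply (Ht (fst (pos Lf i))).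
    + intros x Hx. destruct (Hl x Hx) as [M HM].
      destruct (proj1 (proj2 (proj2 (Ht M))) x HM) as [j [Hj Hjx]].
      destruct (pos_reach Lf HL M) as [i Hi].
      exists (i + j)%nat. rewrite (pos_step Lf i M Hi j Hj). simpl. exact Hjx.
    + exact Hs.
  - destruct (Rle_dec s (eps/2)); auto. exfalso.
    destruct (Hs (s - eps/2) ltac:(lra)) as [N HN].
    specialize (HN N (Nat.le_refl _)). specialize (Hub N).
    unfold Rdist in HN. apply Rabs_def2 in HN. lra.
Qed.


Lemma fin_cover_mono g E d r r' : r <= r' -> fin_cover g E d r -> fin_cover g E d r'.
Proof.
  intros H [L [V [e [H1 [H2 [H3 H4]]]]]]. exists L, V, e. split; [auto|split; [auto|split; [auto|lra]]].
Qed.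

Lemma small_pow (y : R) : 0 < y -> exists N0, forall n, (N0 <= n)%nat -> (/2)^n < y.
Proof.
  intros Hy. destruct (pow_lt_1_zero (/2) ltac:(rewrite Rabs_right; lra) y Hy) as [N0 HN].
  exists N0. intros n Hn. specialize (HN n Hn). rewrite Rabs_right in HN; auto.
  left; apply hp_pos.
Qed.

Theorem core (l : R -> Prop) (g : R -> R) (F : nat -> R) (c : R) (Ng : nat) :
  (forall x, l x -> 0 <= x <= 1) -> (forall y, 0 <= g y) -> g 0 = 0 -> 0 < c ->
  (forall N, 0 <= F N) ->
  (forall N, (Ng <= N)%nat -> g (2 * (/2)^N) <= exp (- (c * F N))) ->
  (forall a, l a -> forall eta, 0 < eta -> exists N0, forall N, (N0 <= N)%nat ->
       INR (countW l a N) <= eta * F N) ->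
  is_Hmeasure g l (Fin 0).
Proof.
  intros Hl01 Hg0 Hg c_pos HF0 Hgb Ho.
  assert (Main : forall delta eps, 0 < delta -> 0 < eps ->
     exists s, cover_sum g l delta s /\ s <= eps / 2).
  { intros delta eps Hd He.
    set (E := fun M a => l a /\ forall N, (M <= N)%nat -> INR (countW l a N) <= (c/4) * F N).
    apply (combine g l E delta eps Hg0 He).
    { intros x Hx. destruct (Ho x Hx (c/4) ltac:(lra)) as [N0 HN0]. exists N0. split; auto. }
    intros M. set (r := eps * (/2)^(S (S M))).
    assert (Hr : 0 < r) by (unfold r; pose proof (hp_pos (S (S M))); apply Rmult_lt_0_compat; lra).
    destruct (small_pow (delta/2) ltac:(lra)) as [Nd HNd].
    set (N1 := Nat.max (Nat.max M Nd) Ng).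
    pose proof ln4_lt2 as L4. pose proof ln4_pos as L4p.
    destruct (classic (exists N, (N1 <= N)%nat /\ 64 * exp (- (c * F N) / 2) <= r)) as [[N [HN Hsm]]|Hno].
    -
      apply (fin_cover_mono _ _ _ (64 * exp ((c/4 * F N) * ln 4) * g (2 * (/2)^N))).
      + pose proof (Hgb N ltac:(lia)) as Hgn.
        pose proof (HF0 N).
        assert (exp (c / 4 * F N * ln 4) * g (2 * (/ 2) ^ N) <= exp (- (c * F N) / 2)).
        { eapply Rle_trans. apply Rmult_le_compat_l. left; apply exp_pos. exact Hgn.
          rewrite <- exp_plus. apply exp_mono.
          assert (0 <= c * F N) by (apply Rmult_le_pos; lra).
          assert (0 <= (c * F N) * (2 - ln 4)) by (apply Rmult_le_pos; lra). nra. }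
        lra.
      + apply (coverA g l); auto.
        * pose proof (HF0 N). apply Rmult_le_pos; lra.
        * specialize (HNd N ltac:(lia)). lra.
        * intros y [Hy HyN]. split; auto. split; auto. apply HyN. lia.
    -
      apply (fin_cover_mono _ _ _ 0); [lra|].
      apply (coverB g _ delta (Z.to_nat (up (64 * 64 / r)))); auto.
      intros P HP HPE.
      destruct (nodup_sep P HP) as [d [Hdpos Hsep]].
      destruct (small_pow d Hdpos) as [Nd' HNd'].
      set (N := Nat.max N1 Nd').
      assert (Hsep' : sep ((/2)^N) P) by (apply (sep_mono _ d); [left; apply HNd'; lia|auto]).
      pose proof (HF0 N).
      assert (HlenB := sep_len l N (c/4 * F N) P ltac:(apply Rmult_le_pos; lra) Hsep').
      assert (INR (length P) < 64 * 64 / r).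
      { eapply Rle_lt_trans. apply HlenB.
        { intros y Hy. destruct (HPE y Hy) as [Hly HyN]. split; auto. split; auto. apply HyN. lia. }
        assert (r < 64 * exp (- (c * F N) / 2)).
        { destruct (Rlt_le_dec r (64 * exp (- (c * F N) / 2))); auto. exfalso. apply Hno.
          exists N. split; [lia|auto]. }
        assert (exp (c / 4 * F N * ln 4) <= exp (c * F N / 2)).
        { apply exp_mono. assert (0 <= c * F N) by (apply Rmult_le_pos; lra).
          assert (0 <= (c * F N) * (2 - ln 4)) by (apply Rmult_le_pos; lra). nra. }
        assert (E1 : exp (c * F N / 2) * exp (- (c * F N) / 2) = 1).
        { rewrite <- exp_plus. replace (c * F N / 2 + - (c * F N) / 2) with 0 by field. apply exp_0. }
        assert (exp (c * F N / 2) < 64 / r).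
        { apply (Rmult_lt_reg_r r); auto. replace (64 / r * r) with 64 by (field; lra).
          pose proof (exp_pos (c * F N / 2)). nra. }
        unfold Rdiv in *. nra. }
      destruct (archimed (64 * 64 / r)) as [Hu _].
      assert (IZR (Z.of_nat (length P)) < IZR (up (64 * 64 / r))) by (rewrite <- INR_IZR_INZ; lra).
      apply lt_IZR in H1. lia. }
  exists (fun _ => Fin 0). split.
  - intros delta Hd. simpl. split.
    + intros s [U [d [HU [Hcov Hsum]]]]. destruct (Rle_dec 0 s) as [|Hn]; auto. exfalso.
      destruct (Hsum (- s) ltac:(lra)) as [N HN]. specialize (HN N (Nat.le_refl _)).
      pose proof (cond_pos_sum (fun i => g (d i)) N (fun i => Hg0 _)).
      unfold Rdist in HN. apply Rabs_def2 in HN. lra.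
    + intros b Hb. destruct (Rle_dec b 0) as [|Hn]; auto. exfalso.
      destruct (Main delta b Hd ltac:(lra)) as [s [Hs Hs2]]. specialize (Hb s Hs). lra.
  - intros eps He. exists 1. split; [lra|]. intros delta _. exists 0. split; auto.
    rewrite Rminus_diag, Rabs_R0; auto.
Qed.


Lemma ln_x N : ln (2 * (/2)^N) = (1 - INR N) * ln 2.
Proof.
  rewrite ln_mult by (try lra; apply hp_pos). rewrite ln_pow by lra. rewrite ln_Rinv by lra. ring.
Qed.

Lemma ln2_pos : 0 < ln 2.
Proof. rewrite <- ln_1. apply ln_increasing; lra. Qed.

Lemma x_pos N : 0 < 2 * (/2)^N.
Proof. pose proof (hp_pos N); lra. Qed.

Lemma lo_conv (l : R -> Prop) (F : nat -> R) (u : nat -> R) :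
  (forall N, 0 <= F N) -> (forall N, u N = F N \/ u N = - F N) ->
  (forall a, l a -> little_o (fun N => INR (countW l a N)) u) ->
  forall a, l a -> forall eta, 0 < eta -> exists N0, forall N, (N0 <= N)%nat ->
       INR (countW l a N) <= eta * F N.
Proof.
  intros HF Hu Ho a Ha eta He. destruct (Ho a Ha eta He) as [N0 HN0]. exists N0.
  intros N HN. specialize (HN0 N HN). rewrite Rabs_right in HN0 by (apply Rle_ge, pos_INR).
  replace (Rabs (u N)) with (F N) in HN0; auto.
  destruct (Hu N) as [-> | ->]; [rewrite Rabs_right|rewrite Rabs_Ropp, Rabs_right]; auto; apply Rle_ge, HF.
Qed.

Theorem proposition4p3 (l : R -> Prop) (Hcomp : compact l)
  (Hsub : forall x, l x -> 0 <= x <= 1) :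
  (forall f : R -> R,
     (forall x, 0 <= x -> 0 <= f x) ->
     (forall a, l a -> little_o (fun N => INR (countW l a N)) (fun N => f (INR N))) ->
     exists r, is_Hmeasure (gauge_of_f f) l (Fin r))
  /\
  (forall sigma, 0 < sigma < 1 ->
     (forall a, l a ->
        little_o (fun N => INR (countW l a N)) (fun N => Rpower (INR N) sigma)) ->
     exists r, is_Hmeasure (gauge_sigma sigma) l (Fin r))
  /\
  ((forall a, l a -> little_o (fun N => INR (countW l a N)) (fun N => INR N)) ->
     is_dimH l 0).
Proof.
  pose proof ln2_pos as L2.
  split; [|split].
  - intros f Hf Ho. exists 0.
    apply (core l _ (fun N => f (INR N)) 1 0).
    + exact Hsub.
    + intro y. unfold gauge_of_f. destruct (Rle_dec y 0); [lra|left; apply exp_pos].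
    + unfold gauge_of_f. destruct (Rle_dec 0 0); [auto|lra].
    + lra.
    + intro N; apply Hf, pos_INR.
    + intros N _. unfold gauge_of_f. pose proof (x_pos N).
      destruct (Rle_dec (2 * (/2)^N) 0); [lra|].
      rewrite ln_x. replace (1 - (1 - INR N) * ln 2 / ln 2) with (INR N) by (field; lra).
      rewrite Rmult_1_l; lra.
    + apply (lo_conv l _ (fun N => f (INR N))); auto. intro N; apply Hf, pos_INR.
  - intros sigma Hs Ho. exists 0.
    apply (core l _ (fun N => Rpower (INR N) sigma) (Rpower (ln 2 / 2) sigma) 2).
    + exact Hsub.
    + intro y. unfold gauge_sigma. destruct (Rle_dec y 0); [lra|left; apply exp_pos].
    + unfold gauge_sigma. destruct (Rle_dec 0 0); [auto|lra].
    + unfold Rpower; apply exp_pos.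
    + intro N; left; unfold Rpower; apply exp_pos.
    + intros N HN. unfold gauge_sigma. pose proof (x_pos N).
      destruct (Rle_dec (2 * (/2)^N) 0); [lra|].
      apply exp_mono. apply Ropp_le_contravar. rewrite ln_x.
      assert (H2 : 2 <= INR N) by (replace 2 with (INR 2) by (simpl; lra); apply le_INR; auto).
      rewrite Rpower_mult_distr by lra.
      apply Rle_Rpower_l; [lra|]. split; nra.
    + apply (lo_conv l _ (fun N => Rpower (INR N) sigma)); auto.
      intro N; left; unfold Rpower; apply exp_pos.
  - intros Ho.
    assert (Hall : forall s, 0 < s -> is_Hmeasure (power_gauge s) l (Fin 0)).
    { intros s Hs.
      apply (core l _ (fun N => INR N) (s * ln 2 / 2) 2).
      + exact Hsub.
      + intro y. unfold power_gauge. destruct (Rle_dec y 0); [lra|left; unfold Rpower; apply exp_pos].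
      + unfold power_gauge. destruct (Rle_dec 0 0); [auto|lra].
      + apply Rmult_lt_0_compat; [apply Rmult_lt_0_compat|]; lra.
      + intro N; apply pos_INR.
      + intros N HN. unfold power_gauge. pose proof (x_pos N).
        destruct (Rle_dec (2 * (/2)^N) 0); [lra|].
        unfold Rpower. apply exp_mono. rewrite ln_x.
        assert (H2 : 2 <= INR N) by (replace 2 with (INR 2) by (simpl; lra); apply le_INR; auto).
        assert (0 <= s * ln 2) by (apply Rmult_le_pos; lra).
        assert (0 <= (s * ln 2) * (INR N - 2)) by (apply Rmult_le_pos; lra). nra.
      + apply (lo_conv l _ (fun N => INR N)); auto. intro N; apply pos_INR. }
    split.
    + intros x [Hx _]; lra.
    + intros b Hb. destruct (Rle_dec b 0) as [|Hn]; auto. exfalso.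
      assert (b <= b / 2) by (apply Hb; split; [lra|apply Hall; lra]). lra.
Qed.
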